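(* Let $k\ge 1$ and let $L=(l_1,\ldots,l_k)$ be a sequence of positive integers, and let $S=S(L)$ be the spider defined by $L$, with head $v_0$. Let $t$ be an integer with $1\le t\le \alpha(S)$. Then for every $1\le i\le k$ we have $$|\mathcal{I}^t_{v_0}(S)|\le |\mathcal{I}^t_{v_{i,l_i}}(S)|.$$
   Context: For a graph $G$, $\alpha(G)$ is the maximum size of an independent set in $G$, and for an integer $t\le\alpha(G)$, $\mathcal{I}^t(G)$ denotes the family of all independent sets of $G$ of size $t$. For a vertex $x$, $\mathcal{I}^t_x(G)$ denotes the subfamily of sets in $\mathcal{I}^t(G)$ containing $x$ (the star centered at $x$). Given a sequence of positive integers $L=(l_1,\ldots,l_k)$, the spider $S(L)$ is the tree consisting of a head vertex $v_0$ and, for each $1\le i\le k$, a leg which is the path $v_0,v_{i,1},v_{i,2},\ldots,v_{i,l_i}$; distinct legs share only $v_0$. *)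

(* Defs.v *)
From mathcomp Require Import all_boot.
Set Implicit Arguments. Unset Strict Implicit. Unset Printing Implicit Defensive.

Section Indep.
Variables (T : finType) (e : rel T).

Definition independent (A : {set T}) : bool :=
  [forall x in A, forall y in A, ~~ e x y].

Definition alpha : nat := \max_(A : {set T} | independent A) #|A|.

Definition indep_t (t : nat) : {set {set T}} :=
  [set A : {set T} | independent A && (#|A| == t)].

Definition indep_star (t : nat) (x : T) : {set {set T}} :=
  [set A in indep_t t | x \in A].
End Indep.

(* The spider S(L), L = (l_0, ..., l_{k-1}) indexed by 'I_k.
   Vertices: None = head v_0;  Some (Tagged i j) with j : 'I_(l i)
   is the vertex v_{i, j+1} (leg i, distance j+1 from the head). *)
Section Spider.
Variables (k : nat) (l : 'I_k -> nat).

Definition spider_vertex : finType := option {i : 'I_k & 'I_(l i)}.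

Definition spider_adj (x y : spider_vertex) : bool :=
  match x, y with
  | None, None => false
  | None, Some u => val (tagged u) == 0
  | Some u, None => val (tagged u) == 0
  | Some u, Some w =>
      (tag u == tag w) &&
      (((val (tagged u)).+1 == val (tagged w)) ||
       ((val (tagged w)).+1 == val (tagged u)))
  end.

Definition spider_head : spider_vertex := None.

Lemma spider_leaf_lt (hl : forall i, 0 < l i) (i : 'I_k) : (l i).-1 < l i.
Proof. by rewrite ltn_predL. Qed.

Definition spider_leaf (hl : forall i, 0 < l i) (i : 'I_k) : spider_vertex :=
  Some (Tagged (fun i => 'I_(l i)) (Ordinal (spider_leaf_lt hl i))).
End Spider.

(* Main.v *)
Require Import Defs.
From mathcomp Require Import all_boot zify.
Set Implicit Arguments. Unset Strict Implicit.

Section S.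
Variables (k : nat) (l : 'I_k -> nat).
Notation V := (spider_vertex l).
Notation adj := (@spider_adj k l).

Definition legof (x : V) : option 'I_k := if x is Some u then Some (tag u) else None.
Definition dep (x : V) : nat := if x is Some u then (val (tagged u)).+1 else 0.

Lemma adjE x y : adj x y = ((legof x == legof y) || (legof x == None) || (legof y == None)) && (((dep x).+1 == dep y) || ((dep y).+1 == dep x)).
Proof.
case: x => [[j m]|]; case: y => [[j' m']|] //=; rewrite ?eqSS ?orbF //.
Qed.

Lemma coord_inj x y : legof x = legof y -> dep x = dep y -> x = y.
Proof.
case: x => [[j m]|]; case: y => [[j' m']|] //= [] Ej [] Em.
subst j'. congr Some. congr existT. exact: val_inj.
Qed.

Lemma dep_leg x j : legof x = Some j -> 0 < dep x <= l j.
Proof. case: x => [[j' m]|] //= [] <-. by rewrite ltn_ord. Qed.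

Variable i : 'I_k.
Notation L := (l i).

Definition mk (d : nat) : V :=
  if d is d'.+1 then
    (match insub d' : option 'I_(l i) with Some m => Some (Tagged (fun i => 'I_(l i)) m) | None => None end)
  else None.

Lemma mk_coord d : d <= L -> dep (mk d) = d /\ legof (mk d) = (if d is 0 then None else Some i).
Proof.
case: d => [|d] //= Hd. case: insubP => [m _ Em|]; last by rewrite Hd.
by rewrite /= Em.
Qed.

Definition onP (x : V) := (legof x == Some i) || (legof x == None).

Lemma onP_dep x : onP x -> dep x <= L.
Proof.
case/orP => /eqP. move/dep_leg; by case/andP.
by case: x.
Qed.

Definition sig (x : V) : V := if onP x then mk (L - dep x) else x.

Lemma sig_coord x : onP x -> dep (sig x) = L - dep x /\ legof (sig x) = (if L - dep x is 0 then None else Some i).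
Proof. move=> H; rewrite /sig H; apply: mk_coord; lia. Qed.

Lemma sig_onP x : onP x -> onP (sig x).
Proof. move=> H; rewrite /onP; have [_ ->] := sig_coord H. case: (L - dep x) => //= n. by rewrite eqxx. Qed.

Lemma sigK : involutive sig.
Proof.
move=> x. case H: (onP x); last by rewrite /sig H H.
have H' := sig_onP H. have [d1 l1] := sig_coord H. have [d2 l2] := sig_coord H'.
have hd := onP_dep H.
apply: coord_inj; last by rewrite d2 d1; lia.
rewrite l2 d1 (subKn hd). clear H' l1 l2 d1 d2.
case: x H hd => [[j m]|] //= /orP [/eqP [Ej]|//] _; by rewrite Ej.
Qed.

Lemma legP z : onP z -> legof z = Some i \/ legof z = None.
Proof. by case/orP=> /eqP ->; [left|right]. Qed.

Lemma sig_both x y : onP x -> onP y -> adj (sig x) (sig y) = adj x y.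
Proof.
move=> Hx Hy. have [dx lx] := sig_coord Hx. have [dy ly] := sig_coord Hy.
have hx := onP_dep Hx. have hy := onP_dep Hy.
rewrite !adjE dx dy lx ly.
have -> : (legof x == legof y) || (legof x == None) || (legof y == None).
  by case: (legP Hx) => ->; case: (legP Hy) => ->; rewrite ?eqxx ?orbT.
have -> : ((if L - dep x is 0 then None else Some i) == (if L - dep y is 0 then None else Some i))
   || ((if L - dep x is 0 then None else Some i) == None) || ((if L - dep y is 0 then None else Some i) == None).
  by case: (L - dep x); case: (L - dep y); rewrite ?eqxx ?orbT.
rewrite /=. apply/idP/idP => /orP [] /eqP E; apply/orP; lia.
Qed.

Lemma sig_mixed x y : onP x -> ~~ onP y -> adj (sig x) y -> sig x = None.
Proof.
move=> Hx Hy. have [dx lx] := sig_coord Hx.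
rewrite adjE lx. case E: (L - dep x) => [|n] H.
  by apply: coord_inj; rewrite ?dx ?lx E.
move: H Hy; rewrite /onP; case: (legof y) => [j|] //=.
rewrite !orbF => H /negbTE Hj. move: H. by rewrite eq_sym Hj.
Qed.

Lemma adj_sym x y : adj x y = adj y x.
Proof. rewrite !adjE. by case: (legof x == None); case: (legof y == None); rewrite ?orbT ?orbF /= 1?eq_sym 1?orbC. Qed.

Lemma sig_offP x : ~~ onP x -> sig x = x.
Proof. by rewrite /sig => /negbTE ->. Qed.

Lemma indep_sig A : independent adj A -> None \in A -> independent adj (sig @: A).
Proof.
move=> HA H0.
have Hind : forall x y, x \in A -> y \in A -> ~~ adj x y.
  move=> x y xA yA. by move/forallP: HA => /(_ x); rewrite xA /= => /forallP /(_ y); rewrite yA.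
have Hmix : forall x y, x \in A -> y \in A -> onP x -> ~~ onP y -> ~~ adj (sig x) (sig y).
  move=> x y xA yA Hx Hy. rewrite (sig_offP Hy). apply/negP => Hadj.
  have E := sig_mixed Hx Hy Hadj. move: Hadj; rewrite E. by apply/negP; apply: Hind.
apply/forallP => x'; apply/implyP => /imsetP [x xA ->]; apply/forallP => y'; apply/implyP => /imsetP [y yA ->].
case Hx: (onP x); case Hy: (onP y).
- by rewrite sig_both // Hind.
- by apply: Hmix; rewrite ?Hx ?Hy.
- by rewrite adj_sym; apply: Hmix; rewrite ?Hx ?Hy.
- by rewrite !sig_offP ?Hx ?Hy // Hind.
Qed.

Lemma sig_head (hl : forall i, 0 < l i) : sig None = spider_leaf hl i.
Proof.
have Hn : onP None by [].
have [d1 l1] := sig_coord Hn. have hi := hl i.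
apply: coord_inj; rewrite ?d1 ?l1 /=; first by case E: (L - 0) => //; lia.
rewrite subn0; lia.
Qed.
End S.

Unset Implicit Arguments. Set Strict Implicit.

Theorem theorem2p2 (k : nat) (l : 'I_k -> nat) (hl : forall i, 0 < l i)
  (t : nat) :
  1 <= k ->
  1 <= t -> t <= alpha (@spider_adj k l) ->
  forall i : 'I_k,
    #|indep_star (@spider_adj k l) t (spider_head l)|
      <= #|indep_star (@spider_adj k l) t (spider_leaf hl i)|.
Proof.
move=> _ _ _ i.
have inj : injective (sig i) := can_inj (@sigK k l i).
rewrite -(card_imset _ (imset_inj inj)).
apply: subset_leq_card; apply/subsetP => _ /imsetP [A HA ->].
move: HA; rewrite !inE => /andP [/andP [Hi Hc] H0].
rewrite -(sig_head i hl) (mem_imset _ _ inj) H0 andbT.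
rewrite (card_imset _ inj) Hc andbT.
exact: indep_sig.
Qed.
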